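(* Let $X$, $\mathcal{B}$, $\Delta$, the map $\iota:X\to\Delta$ and the Gelfand transform be as in the context (in particular $\mathcal{B}$ vanishes nowhere on $X$). For $f\in\mathcal{B}$ and $k\in\mathbb{N}\setminus\{0\}$ let $N_k(f):=\{x\in X: |f(x)|\geq 1/k\}$. Then the closure of $\iota(N_k(f))$ in $\Delta$ is compact.
   Context: $X$ is a nonempty set and $\mathcal{B}$ is a real vector space of bounded functions $X\to\mathbb{R}$ closed under pointwise multiplication, pointwise max and min, with $f\wedge1\in\mathcal{B}$ for $f\in\mathcal{B}$. Assume that for every $x\in X$ there is $f\in\mathcal{B}$ with $f(x)\neq0$. $A(\mathcal{B})$ is the supremum-norm closure of $\mathcal{B}+i\mathcal{B}$, a commutative $C^\ast$-algebra with pointwise operations and complex conjugation as involution; $\Delta$ is its spectrum (nonzero continuous multiplicative linear functionals with the Gelfand topology), locally compact Hausdorff; $\hat a(\varphi)=\varphi(a)$ is the Gelfand transform, an isometric $^\ast$-isomorphism $A(\mathcal{B})\to C_0(\Delta)$. The map $\iota:X\to\Delta$ is defined by $\iota(x)(a)=a(x)$ for $a\in A(\mathcal{B})$. *)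

(* Defs.v *)
From HB Require Import structures.
From mathcomp Require Import all_boot all_order all_algebra.
From mathcomp Require Import all_classical all_reals all_analysis.
From mathcomp Require Import complex.
Import Order.TTheory GRing.Theory Num.Theory.
Import numFieldNormedType.Exports.

Set Implicit Arguments.
Unset Strict Implicit.
Unset Printing Implicit Defensive.

Local Open Scope classical_set_scope.
Local Open Scope ring_scope.
Local Open Scope complex_scope.

Definition Cplx (R : realType) : numClosedFieldType := R[i].

Definition lattice_algebra (R : realType) (X : Type) (B : set (X -> R)) : Prop :=
  B (fun _ => 0) /\
  (forall f g, B f -> B g -> B (fun x => f x + g x)) /\
  (forall (c : R) f, B f -> B (fun x => c * f x)) /\
  (forall f g, B f -> B g -> B (fun x => f x * g x)) /\
  (forall f g, B f -> B g -> B (fun x => Order.max (f x) (g x))) /\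
  (forall f g, B f -> B g -> B (fun x => Order.min (f x) (g x))) /\
  (forall f, B f -> B (fun x => Order.min (f x) 1)) /\
  (forall f, B f -> exists M : R, forall x, `|f x| <= M).

(* A(B): the sup-norm closure of B + iB, as a set of complex functions on X. *)
Definition AB (R : realType) (X : Type) (B : set (X -> R)) : set (X -> Cplx R) :=
  [set a | forall e : R, 0 < e ->
     exists f g, [/\ B f, B g &
       forall x, `|a x - ((f x +i* g x) : Cplx R)| <= (e%:C : Cplx R)]].

(* A functional on A(B) is encoded as a total map (X -> C) -> C that vanishes
   outside A(B) (so functionals on A(B) correspond bijectively to such maps). *)
Definition functional (R : realType) (X : Type) :=
  {ptws (X -> Cplx R) -> Cplx R}.

Definition is_character (R : realType) (X : Type) (B : set (X -> R))
  (phi : functional R X) : Prop :=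
  (forall a, ~ AB B a -> phi a = 0) /\
  (forall a b, AB B a -> AB B b -> phi (fun x => a x + b x) = phi a + phi b) /\
  (forall (c : Cplx R) a, AB B a -> phi (fun x => c * a x) = c * phi a) /\
  (forall a b, AB B a -> AB B b -> phi (fun x => a x * b x) = phi a * phi b) /\
  (forall a, AB B a -> forall e : R, 0 < e -> exists d : R, 0 < d /\
         forall b, AB B b -> (forall x, `|a x - b x| <= (d%:C : Cplx R)) ->
           `|phi a - phi b| <= (e%:C : Cplx R)) /\
  (exists a, AB B a /\ phi a != 0).

(* The spectrum Delta, with the Gelfand (weak-star) topology: the topology
   induced by the inclusion into the space of functionals with the topology of
   pointwise convergence on A(B). *)
Definition Delta (R : realType) (X : Type) (B : set (X -> R)) : topologicalType :=
  set_type (is_character B).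

(* Evaluation at x, as a functional on A(B) (the underlying map of iota(x)). *)
Definition ev (R : realType) (X : Type) (B : set (X -> R)) (x : X)
  : functional R X :=
  fun a => if `[< AB B a >] then a x else 0.

Definition iota_img (R : realType) (X : Type) (B : set (X -> R)) (S : set X)
  : set (Delta B) :=
  [set d | exists2 x, S x & set_val d = ev B x].

Definition Nk (R : realType) (X : Type) (f : X -> R) (k : nat) : set X :=
  [set x | k%:R^-1 <= `|f x|].

Arguments AB {R X} B _.
Arguments is_character {R X} B phi.
Arguments Delta {R X} B.
Arguments ev {R X} B x _.
Arguments iota_img {R X} B S _.
Arguments Nk {R X} f k _.

(* Main.v *)
Require Import Defs.
From HB Require Import structures.
From mathcomp Require Import all_boot all_order all_algebra.
From mathcomp Require Import all_classical all_reals all_analysis.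
From mathcomp Require Import complex.
Import Order.TTheory GRing.Theory Num.Theory.
Import numFieldNormedType.Exports.
Local Open Scope classical_set_scope.
Local Open Scope ring_scope.
Local Open Scope complex_scope.

Section Cx.
Variable (R : realType).
Local Notation C := (Cplx R).

Lemma normC_real (a : R) : `|(a%:C : C)| = `|a|%:C.
Proof. by rewrite normc_def /= expr0n addr0 sqrtr_sqr. Qed.

Lemma normC_i : `|('i : C)| = 1.
Proof. by rewrite normc_def /= expr0n add0r expr1n sqrtr1. Qed.

Lemma n2 (a b c d : R) : ((a +i* b) * (c +i* d) : C) = (a * c - b * d) +i* (a * d + b * c).
Proof. by []. Qed.

Lemma cE (a b : R) : (a +i* b : C) = a%:C + 'i * b%:C.
Proof. by rewrite [LHS]complexE. Qed.

Lemma normC_le (a b : R) : `|(a +i* b : C)| <= (`|a| + `|b|)%:C.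
Proof.
rewrite cE rmorphD /= -!normC_real.
apply: (le_trans (ler_normD _ _)); rewrite normrM normC_i mul1r //.
Qed.

Lemma real_C (a : R) : (a%:C : C) \is Num.real.
Proof. by rewrite complex_real. Qed.

Lemma rc_cont : continuous (fun x : R => (x%:C : C)).
Proof.
move=> x; apply/cvgrPdist_lt => -[er ei]; rewrite ltcE /= => /andP[/eqP -> e0'].
near=> y; rewrite -rmorphB normC_real ltcR.
near: y; move/cvgrPdist_lt: (@cvg_id _ (nbhs x)); exact.
Unshelve. all: end_near. Qed.

Definition hC (p : R * R) : C := p.1 +i* p.2.

Lemma hC_cont : continuous hC.
Proof.
move=> p.
have -> : hC = (fun q : R * R => (q.1)%:C : C) + ((fun _ => 'i) \* (fun q : R * R => (q.2)%:C)).
  by apply/funext => q; rewrite /hC cE.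
apply: continuousD.
  apply: (continuous_comp _ (rc_cont _)); exact: cvg_fst.
apply: (@continuousM C); first exact: cvg_cst.
apply: (continuous_comp _ (rc_cont _)); exact: cvg_snd.
Qed.

Lemma compact_boxC (M : R) : compact [set z : C | `|complex.Re z| <= M /\ `|complex.Im z| <= M].
Proof.
have -> : [set z : C | `|complex.Re z| <= M /\ `|complex.Im z| <= M] =
   hC @` (`[-M, M]%classic `*` `[-M, M]%classic).
  apply/seteqP; split.
    case=> a b /= [ha hb]; exists (a, b) => //; split; rewrite /= in_itv /= -ler_norml //.
  move=> z [[a b] [/= ]]; rewrite !in_itv /= -!ler_norml => ha hb <-; by split.
apply: continuous_compact; first exact/continuous_subspaceT/hC_cont.
apply: compact_setX; exact: segment_compact.
Qed.

Lemma closedC_le (r : R) : closed [set z : C | `|z| <= r%:C].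
Proof.
rewrite -openC openE => z /= nz.
have lt : r%:C < `|z| by rewrite real_ltNge ?normr_real ?real_C //; exact/negP.
apply/nbhs_ballP; exists (`|z| - r%:C); first by rewrite /= subr_gt0.
move=> w; rewrite -ball_normE /= => hw hwr.
have := lerB_dist z w => /le_lt_trans/(_ hw).
rewrite ltrD2l ltrN2 => /lt_le_trans/(_ hwr); by rewrite ltxx.
Qed.

Lemma closedC_ge (r : R) : closed [set z : C | r%:C <= `|z|].
Proof.
rewrite -openC openE => z /= nz.
have lt : `|z| < r%:C by rewrite real_ltNge ?normr_real ?real_C //; exact/negP.
apply/nbhs_ballP; exists (r%:C - `|z|); first by rewrite /= subr_gt0.
move=> w; rewrite -ball_normE /= => hw hwr.
have := lerB_dist w z; rewrite distrC => /le_lt_trans/(_ hw).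
rewrite ltrBlDl addrC subrK => /lt_le_trans/(_ hwr); by rewrite ltxx.
Qed.

Lemma closed_normle (T : topologicalType) (w : T -> C) (r : R) :
  continuous w -> closed [set t | `|w t| <= r%:C].
Proof. by move/continuous_closedP => /(_ _ (closedC_le r)). Qed.

Lemma closed_normge (T : topologicalType) (w : T -> C) (r : R) :
  continuous w -> closed [set t | r%:C <= `|w t|].
Proof. by move/continuous_closedP => /(_ _ (closedC_ge r)). Qed.

Lemma closed_forall (T : topologicalType) (I : Type) (P : I -> Prop)
  (w : I -> T -> C) (r : I -> R) :
  (forall i, continuous (w i)) ->
  closed [set t | forall i, P i -> `|w i t| <= (r i)%:C].
Proof.
move=> cw.
have -> : [set t | forall i, P i -> `|w i t| <= (r i)%:C] =
  \bigcap_(i in P) [set t | `|w i t| <= (r i)%:C].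
  by apply/seteqP; split => t /= h i Pi; apply: h.
by apply: closed_bigI => i _; exact: closed_normle.
Qed.

End Cx.

Lemma compact_set_type (T : topologicalType) (P : set T) (K : set (set_type P)) :
  compact (set_val @` K) -> compact K.
Proof.
move=> cK F PF FK.
have PG : ProperFilter (set_val @ F) by exact: fmap_proper_filter.
case: (cK (set_val @ F) PG _) => [| p [[q Kq <-] clp]].
  by apply: (@filterS _ F _ K (set_val @^-1` (set_val @` K))) FK => y Ky; exists y.
exists q; split => //.
move=> A U FA nU.
rewrite nbhsE in nU.
case: nU => V [oV Vq] VU.
case: oV => W oW WV.
have : (set_val @` A `&` W) !=set0.
  apply: clp. by apply: (@filterS _ F _ A (set_val @^-1` (set_val @` A))) FA => y Ay; exists y.
  apply: open_nbhs_nbhs; split => //. by rewrite -WV in Vq.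
case=> _ [[y Ay <-] Wy]; exists y; split => //; apply: VU; rewrite -WV; exact: Wy.
Qed.

Section AB.
Variables (R : realType) (X : Type) (B : set (X -> R)).
Hypothesis HL : lattice_algebra B.
Local Notation C := (Cplx R).

Let B0 : B (fun _ => 0). Proof. by case: HL. Qed.
Let Badd f g : B f -> B g -> B (fun x => f x + g x).
Proof. by case: HL => _ [h _]; exact: h. Qed.
Let Bscal (c : R) f : B f -> B (fun x => c * f x).
Proof. by case: HL => _ [_ [h _]]; exact: h. Qed.
Let Bmul f g : B f -> B g -> B (fun x => f x * g x).
Proof. by case: HL => _ [_ [_ [h _]]]; exact: h. Qed.
Let Bbd f : B f -> exists M : R, forall x, `|f x| <= M.
Proof. by case: HL => _ [_ [_ [_ [_ [_ [_ h]]]]]]; exact: h. Qed.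

Lemma AB_real f : B f -> AB B (fun x => (f x)%:C).
Proof.
move=> Bf e e0; exists f, (fun _ => 0); split => // x.
by rewrite complexr0 subrr normr0 lecR ltW.
Qed.

Lemma AB_zero : AB B (fun _ => 0).
Proof.
move=> e e0; exists (fun _ => 0), (fun _ => 0); split => // x.
by rewrite complexr0 subrr normr0 lecR ltW.
Qed.

Lemma AB_add a b : AB B a -> AB B b -> AB B (fun x => a x + b x).
Proof.
move=> Ha Hb e e0.
have e2 : 0 < e / 2 by rewrite divr_gt0.
case: (Ha _ e2) => f1 [g1 [Bf1 Bg1 h1]].
case: (Hb _ e2) => f2 [g2 [Bf2 Bg2 h2]].
exists (fun x => f1 x + f2 x), (fun x => g1 x + g2 x); split; try exact: Badd.
move=> x.
have -> : ((f1 x + f2 x) +i* (g1 x + g2 x) : C) = (f1 x +i* g1 x) + (f2 x +i* g2 x) by [].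
rewrite opprD addrACA (splitr e) rmorphD /=.
by apply: (le_trans (ler_normD _ _)); apply: lerD.
Qed.

Lemma AB_bounded a : AB B a -> exists M : R, 0 <= M /\ forall x, `|a x| <= M%:C.
Proof.
move=> /(_ 1 ltr01) [f [g [Bf Bg h]]].
case: (Bbd _ Bf) => Mf hf; case: (Bbd _ Bg) => Mg hg.
exists (1 + (`|Mf| + `|Mg|)); split; first by rewrite addr_ge0.
move=> x; rewrite -(subrK (f x +i* g x) (a x)).
apply: (le_trans (ler_normD _ _)); rewrite rmorphD /=; apply: lerD; first exact: h.
apply: (le_trans (normC_le _ _ _)); rewrite lecR; apply: lerD.
  exact: (le_trans (hf x) (ler_norm _)).
exact: (le_trans (hg x) (ler_norm _)).
Qed.

Lemma normC_cplx (c : C) : `|c| <= (`|complex.Re c| + `|complex.Im c|)%:C.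
Proof. by case: c => cr ci; exact: normC_le. Qed.

Lemma AB_scale (c : C) a : AB B a -> AB B (fun x => c * a x).
Proof.
move=> Ha e e0; case: c => cr ci.
set N := `|cr| + `|ci|.
have N0 : 0 <= N by rewrite addr_ge0.
have e1 : 0 < e / (N + 1) by rewrite divr_gt0 // ltr_wpDl.
case: (Ha _ e1) => f [g [Bf Bg h]].
exists (fun x => cr * f x + (- ci) * g x), (fun x => ci * f x + cr * g x); split.
- by apply: Badd; apply: Bscal.
- by apply: Badd; apply: Bscal.
move=> x.
have -> : ((cr * f x + - ci * g x) +i* (ci * f x + cr * g x) : C) =
  (cr +i* ci) * (f x +i* g x).
  by rewrite n2 mulNr (addrC (ci * f x)).
rewrite -mulrBr normrM.
apply: (le_trans (ler_pM _ _ (normC_le _ cr ci) (h x))) => //.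
rewrite -rmorphM /= lecR.
have N1 : 0 < N + 1 by rewrite ltr_wpDl.
rewrite mulrA (ler_pdivrMr _ _ N1) mulrC ler_pM2l // lerDl //.
Qed.

Lemma AB_mul a b : AB B a -> AB B b -> AB B (fun x => a x * b x).
Proof.
move=> Ha Hb e e0.
case: (@AB_bounded a Ha) => Ma [Ma0 hMa]; case: (@AB_bounded b Hb) => Mb [Mb0 hMb].
set K := Ma + Mb + 1.
have K0 : 0 < K by rewrite ltr_wpDl // addr_ge0.
set e1 := Num.min 1 (e / K).
have e10 : 0 < e1 by rewrite lt_min ltr01 divr_gt0.
have e11 : e1 <= 1 by rewrite ge_min lexx.
have e1K : e1 * K <= e by rewrite -(ler_pdivlMr _ _ K0) ge_min lexx orbT.
case: (Ha _ e10) => f1 [g1 [Bf1 Bg1 h1]].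
case: (Hb _ e10) => f2 [g2 [Bf2 Bg2 h2]].
exists (fun x => f1 x * f2 x + (-1) * (g1 x * g2 x)),
       (fun x => f1 x * g2 x + g1 x * f2 x); split.
- by apply: Badd; [apply: Bmul | apply: Bscal; apply: Bmul].
- by apply: Badd; apply: Bmul.
move=> x.
have -> : ((f1 x * f2 x + -1 * (g1 x * g2 x)) +i* (f1 x * g2 x + g1 x * f2 x) : C) =
  (f1 x +i* g1 x) * (f2 x +i* g2 x) by rewrite n2 mulN1r.
set p := (f1 x +i* g1 x); set q := (f2 x +i* g2 x).
have -> : a x * b x - p * q = a x * (b x - q) + (a x - p) * q.
  by rewrite mulrBr mulrBl addrA subrK.
have hq : `|q| <= (Mb + 1)%:C.
  rewrite -(subrK (b x) q) rmorphD /=; apply: (le_trans (ler_normD _ _)).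
  rewrite [X in _ <= X]addrC; apply: lerD; last exact: hMb.
  by rewrite distrC; apply: (le_trans (h2 x)); rewrite lecR.
apply: (le_trans (ler_normD _ _)); rewrite !normrM.
apply: (@le_trans _ _ ((Ma * e1)%:C + (e1 * (Mb + 1))%:C)).
  apply: lerD; rewrite rmorphM /=; apply: ler_pM => //.
rewrite -rmorphD /= lecR; apply: le_trans e1K.
by rewrite /K mulrC -mulrDr -addrA.
Qed.

Lemma char_bound (phi : functional R X) a (M : R) :
  is_character B phi -> AB B a -> 0 <= M -> (forall x, `|a x| <= M%:C) ->
  `|phi a| <= M%:C.
Proof.
case=> Hvan [Hadd [Hsc [Hmul [Hcont Hnz]]]] Ha M0 HM.
have phi0 : phi (fun _ => 0) = 0.
  have -> : (fun _ : X => (0:C)) = (fun _ => 0 * 0) by apply/funext => x; rewrite mul0r.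
  by rewrite Hsc ?mul0r //; exact: AB_zero.
case: (Hcont _ AB_zero 1 ltr01) => d [d0 hd].
have hb : forall b, AB B b -> (forall x, `|b x| <= d%:C) -> `|phi b| <= 1%:C.
  move=> b Hb hbx; have := hd b Hb; rewrite phi0 sub0r normrN; apply => x.
  rewrite sub0r normrN; exact: hbx.
rewrite real_leNgt ?normr_real ?real_C //; apply/negP => lt.
set l := phi a in lt.
have hl := normc_def l.
set rl := Num.sqrt _ in hl.
move: lt; rewrite hl ltcR => lt.
have rl0 : 0 < rl by apply: le_lt_trans lt.
have l0 : l != 0 by rewrite -normr_eq0 hl (inj_eq (@complexI _)) gt_eqF.
set b := fun x => l^-1 * a x.
have Hb : AB B b by apply: AB_scale.
have pb : phi b = 1 by rewrite /b Hsc // mulVf.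
set r := M / rl.
have r0 : 0 <= r by rewrite divr_ge0 // ltW.
have r1 : r < 1 by rewrite /r ltr_pdivrMr // mul1r.
have hbx : forall x, `|b x| <= r%:C.
  move=> x; rewrite /b normrM normrV ?unitfE // hl /r rmorphM /= fmorphV /=.
  by rewrite mulrC ler_wpM2r // invr_ge0 ler0c ltW.
set bn := fun n x => b x ^+ n.+1.
have Hbn : forall n, AB B (bn n) /\ phi (bn n) = 1.
  elim=> [|n [IH1 IH2]].
    have -> : bn 0%N = b by apply/funext => x; rewrite /bn expr1.
    by split.
  have -> : bn n.+1 = (fun x => b x * bn n x) by apply/funext => x; rewrite /bn exprS.
  split; first exact: AB_mul.
  by rewrite Hmul // pb IH2 mulr1.
have hbnx : forall n x, `|bn n x| <= (r ^+ n.+1)%:C.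
  move=> n x; rewrite /bn normrX rmorphXn /=.
  apply: (@lerXn2r _ n.+1 (`|b x|) (r%:C)); [by rewrite nnegrE normr_ge0 | by rewrite nnegrE ler0c | exact: hbx].
have d2 : 0 < d / 2 by rewrite divr_gt0.
have hr : `|r| < 1 by rewrite ger0_norm.
have [N _ hN] := cvg_expr hr (nbhsx_ballx 0 (d/2) d2).
have := hN N.+1 (leqnSn N).
rewrite /= /ball /= sub0r normrN ger0_norm ?exprn_ge0 // => hNr.
have Hc : AB B (fun x => 2 * bn N x) by apply: AB_scale; exact: (Hbn N).1.
have hc1 := hb _ Hc.
have pc : phi (fun x => 2 * bn N x) = 2.
  by rewrite (Hsc 2 (bn N) (Hbn N).1) (Hbn N).2 mulr1.
rewrite pc in hc1.
have : `|(2:C)| <= 1%:C.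
  apply: hc1 => y; rewrite normrM normr_nat.
  apply: (le_trans (ler_wpM2l _ (hbnx N y))); first by [].
  rewrite -(rmorph_nat (real_complex R)) -rmorphM lecR.
  by move: (ltW hNr); rewrite ler_pdivlMr // mulrC.
by rewrite normr_nat rmorph1 lern1.
Qed.

Definition Aset (a : X -> C) : set C :=
  [set z | forall M : R, (0 <= M /\ (AB B a -> forall x, `|a x| <= M%:C)) ->
     `|z| <= M%:C].

Lemma normIm_le (z : C) : `|complex.Im z|%:C <= `|z|.
Proof.
have := normc_ge_Re (z * 'i); rewrite ReiNIm normrN normrM normC_i mulr1 //.
Qed.

Lemma compact_Aset a : compact (Aset a).
Proof.
have [M0 [M00 hM0]] : exists M0, 0 <= M0 /\ (AB B a -> forall x, `|a x| <= M0%:C).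
  case: (pselect (AB B a)) => Ha.
    by case: (@AB_bounded a Ha) => M [? ?]; exists M; split.
  by exists 0; split.
apply: (subclosed_compact _ (compact_boxC _ M0)).
  have cid : forall i : R, continuous (fun z : C => z) by move=> _ z; exact: cvg_id.
  exact: (@closed_forall R C R (fun M => 0 <= M /\ (AB B a -> forall x, `|a x| <= M%:C))
           (fun _ z => z) id cid).
move=> z /(_ M0 (conj M00 hM0)) hz; split.
  by rewrite -lecR; apply: le_trans hz; exact: normc_ge_Re.
by rewrite -lecR; apply: le_trans hz; exact: normIm_le.
Qed.

Definition Sset := [set phi : functional R X | forall a, Aset a (phi a)].

Lemma compact_S : compact Sset.
Proof. exact: (@tychonoff (X -> C) (fun _ => C) Aset compact_Aset). Qed.

Lemma hausdorff_F : hausdorff_space (functional R X).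
Proof.
apply: (@hausdorff_product (X -> C) (fun _ => C)) => _; exact: norm_hausdorff.
Qed.

Lemma contP (u : X -> C) : continuous (fun phi : functional R X => phi u).
Proof. exact: (@proj_continuous (X -> C) (fun _ => C) u). Qed.

Lemma cont_sub (T : topologicalType) (g h : T -> C) :
  continuous g -> continuous h -> continuous (fun t => g t - h t).
Proof. by move=> cg ch t; exact: (continuousB (cg t) (ch t)). Qed.

Lemma cont_add (T : topologicalType) (g h : T -> C) :
  continuous g -> continuous h -> continuous (fun t => g t + h t).
Proof. by move=> cg ch t; exact: (continuousD (cg t) (ch t)). Qed.

Lemma cont_mul (T : topologicalType) (g h : T -> C) :
  continuous g -> continuous h -> continuous (fun t => g t * h t).
Proof. by move=> cg ch t; exact: (@continuousM C _ _ _ _ (cg t) (ch t)). Qed.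

Lemma cont_cst (T : topologicalType) (c : C) : continuous (fun _ : T => c).
Proof. by move=> t; exact: cvg_cst. Qed.

Lemma eq_of_le0 (u v : C) : `|u - v| <= 0%:C -> u = v.
Proof. by rewrite rmorph0 normr_le0 subr_eq0 => /eqP. Qed.

Variables (f : X -> R) (k : nat).
Hypothesis Bf : B f.
Hypothesis hk : (0 < k)%N.
Let fC := fun x => (f x)%:C.

Definition KF := [set phi : functional R X |
  [/\ Sset phi,
   (forall ab : (X -> C) * (X -> C), AB B ab.1 /\ AB B ab.2 ->
      `|phi (fun x => ab.1 x + ab.2 x) - (phi ab.1 + phi ab.2)| <= 0%:C),
   (forall ca : C * (X -> C), AB B ca.2 ->
      `|phi (fun x => ca.1 * ca.2 x) - ca.1 * phi ca.2| <= 0%:C),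
   (forall ab : (X -> C) * (X -> C), AB B ab.1 /\ AB B ab.2 ->
      `|phi (fun x => ab.1 x * ab.2 x) - phi ab.1 * phi ab.2| <= 0%:C) &
   (k%:R^-1)%:C <= `|phi fC| ] ].

Lemma closed_KF : closed KF.
Proof.
have -> : KF = Sset `&`
  [set phi : functional R X | forall ab : (X -> C) * (X -> C), AB B ab.1 /\ AB B ab.2 ->
      `|phi (fun x => ab.1 x + ab.2 x) - (phi ab.1 + phi ab.2)| <= (fun _ => 0) ab %:C] `&`
  [set phi : functional R X | forall ca : C * (X -> C), AB B ca.2 ->
      `|phi (fun x => ca.1 * ca.2 x) - ca.1 * phi ca.2| <= (fun _ => 0) ca %:C] `&`
  [set phi : functional R X | forall ab : (X -> C) * (X -> C), AB B ab.1 /\ AB B ab.2 ->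
      `|phi (fun x => ab.1 x * ab.2 x) - phi ab.1 * phi ab.2| <= (fun _ => 0) ab %:C] `&`
  [set phi : functional R X | (k%:R^-1)%:C <= `|phi fC|].
  apply/seteqP; split => phi /=.
    by case=> h1 h2 h3 h4 h5.
  by case=> [[[[h1 h2] h3] h4] h5]; split.
apply: closedI; last by apply: closed_normge; exact: contP.
apply: closedI; last first.
  apply: closed_forall => ab; apply: cont_sub; first exact: contP.
  by apply: cont_mul; exact: contP.
apply: closedI; last first.
  apply: closed_forall => ca; apply: cont_sub; first exact: contP.
  by apply: cont_mul; [exact: cont_cst | exact: contP].
apply: closedI; last first.
  apply: closed_forall => ab; apply: cont_sub; first exact: contP.
  by apply: cont_add; exact: contP.
exact: compact_closed hausdorff_F compact_S.
Qed.

Lemma compact_KF : compact KF.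
Proof. by apply: subclosed_compact closed_KF compact_S _ => phi []. Qed.

Lemma KF_char phi : KF phi -> is_character B phi.
Proof.
case=> hS h2 h3 h4 h5.
have Hadd a b : AB B a -> AB B b -> phi (fun x => a x + b x) = phi a + phi b.
  by move=> Ha Hb; apply: eq_of_le0; exact: (h2 (a, b)).
have Hsc c a : AB B a -> phi (fun x => c * a x) = c * phi a.
  by move=> Ha; apply: eq_of_le0; exact: (h3 (c, a)).
split.
  move=> a nA; apply: eq_of_le0; rewrite subr0.
  by apply: (hS a 0); split => // /nA.
split; first exact: Hadd.
split; first exact: Hsc.
split.
  by move=> a b Ha Hb; apply: eq_of_le0; exact: (h4 (a, b)).
split.
  move=> a Ha e e0; exists e; split => // b Hb hab.
  have Hnb : AB B (fun x => -1 * b x) by exact: AB_scale.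
  have := Hadd _ _ Ha Hnb; rewrite Hsc // mulN1r => <-.
  apply: (hS _ e); split; first exact: ltW.
  by move=> _ x; rewrite mulN1r; exact: hab.
exists fC; split; first exact: AB_real.
apply/eqP => h0; move: h5; rewrite h0 normr0 lecR.
by rewrite real_leNgt ?num_real // invr_gt0 ltr0n hk.
Qed.

Lemma char_KF phi : is_character B phi -> (k%:R^-1)%:C <= `|phi fC| -> KF phi.
Proof.
move=> Hc h5; have Hc' := Hc.
case: Hc' => Hvan [Hadd [Hsc [Hmul _]]].
split => //.
- move=> a M [M0 HM]; case: (pselect (AB B a)) => Ha.
    exact: char_bound Hc Ha M0 (HM Ha).
  by rewrite Hvan // normr0 ler0c.
- by move=> [a b] [/= Ha Hb]; rewrite Hadd // subrr normr0 rmorph0.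
- by move=> [c a] /= Ha; rewrite Hsc // subrr normr0 rmorph0.
- by move=> [a b] [/= Ha Hb]; rewrite Hmul // subrr normr0 rmorph0.
Qed.

Lemma main_sec : compact (closure (iota_img B (Nk f k))).
Proof.
set KD := [set d : Delta B | (k%:R^-1)%:C <= `|set_val d fC|].
have img : set_val @` KD = KF.
  apply/seteqP; split.
    by move=> _ [d Kd <-]; apply: char_KF => //; exact: (set_valP d).
  move=> phi Kphi; exists (SigSub (mem_set (@KF_char phi Kphi))) => //; by case: Kphi.
have cKD : compact KD by apply: compact_set_type; rewrite img; exact: compact_KF.
have cv : continuous (set_val : Delta B -> functional R X).
  exact: (@initial_continuous (Delta B) (functional R X) set_val).
have clKD : closed KD.
  apply: (closed_normge _ _ (fun d : Delta B => set_val d fC)).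
  by move=> d; apply: continuous_comp (cv d) (contP _ _).
have sub : iota_img B (Nk f k) `<=` KD.
  move=> d [x Nx hd]; rewrite /KD /= hd /ev (asboolT (@AB_real f Bf)).
  by rewrite /fC normC_real lecR.
apply: (subclosed_compact (@closed_closure _ _) cKD).
have e := (closure_id KD).1 clKD.
by move=> d /(closureS sub); rewrite -e.
Qed.

End AB.

Theorem mainTheorem6 (R : realType) (X : Type) (B : set (X -> R)) :
  inhabited X ->
  lattice_algebra B ->
  (forall x : X, exists f, B f /\ f x != 0) ->
  forall f : X -> R, B f -> forall k : nat, (0 < k)%N ->
    compact (closure (iota_img B (Nk f k))).
Proof. by move=> _ HL _ f Bf k hk; exact: main_sec. Qed.
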